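(* Let $C$ be a nonempty subset of a Hilbert space $H$ and let $\mathcal{S}=\{T_s:s\in S\}$ be a representation of a semigroup $S$ on $C$. If $A_C(\mathcal{S})\neq\emptyset$, then $A_C(\mathcal{S})$ is closed and convex.
   Context: A representation is a family of maps $T_s:C\to C$ with $T_{st}=T_s\circ T_t$. $A_C(\mathcal{S})$ is the set of all $a\in H$ with $\|a-T_sx\|\le\|a-x\|$ for all $x\in C$ and $s\in S$. *)

(* Defs.v *)
From HB Require Import structures.
From mathcomp Require Import all_boot all_order all_algebra.
From mathcomp Require Import all_classical all_reals all_analysis.
Set Implicit Arguments. Unset Strict Implicit. Unset Printing Implicit Defensive.
Import Order.TTheory GRing.Theory Num.Theory.
Import numFieldNormedType.Exports.
Local Open Scope classical_set_scope.
Local Open Scope ring_scope.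

(* A (real) inner product on a normed module V whose norm it induces.
   A real Hilbert space is a complete normed module carrying such an
   inner product. *)
Definition is_inner_product (R : realType) (V : normedModType R)
    (ip : V -> V -> R) : Prop :=
  [/\ (forall x y : V, ip x y = ip y x),
      (forall (a : R) (x y z : V), ip (a *: x + y) z = a * ip x z + ip y z)
    & (forall x : V, `|x| ^+ 2 = ip x x)].

Definition semigroup_law (S : Type) (op : S -> S -> S) : Prop :=
  forall s t u, op s (op t u) = op (op s t) u.

Definition representation_on (S : Type) (op : S -> S -> S) (V : Type)
    (C : set V) (T : S -> V -> V) : Prop :=
  (forall s x, C x -> C (T s x)) /\
  (forall s t x, C x -> T (op s t) x = T s (T t x)).

Definition attractive_points (R : realType) (V : normedModType R) (S : Type)
    (C : set V) (T : S -> V -> V) : set V :=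
  [set a | forall x s, C x -> `|a - T s x| <= `|a - x|].

(* Main.v *)
Require Import Defs.
From HB Require Import structures.
From mathcomp Require Import all_boot all_order all_algebra.
From mathcomp Require Import all_classical all_reals all_analysis.
From mathcomp Require Import ring lra.
Import Order.TTheory GRing.Theory Num.Theory.
Import numFieldNormedType.Exports.
Local Open Scope classical_set_scope.
Local Open Scope ring_scope.
Local Open Scope convex_scope.

Section IP.
Variables (R : realType) (H : normedModType R) (ip : H -> H -> R).
Hypothesis hip : is_inner_product ip.

Lemma ipDl x y z : ip (x + y) z = ip x z + ip y z.
Proof. case: hip => _ h _. by have := h 1 x y z; rewrite scale1r mul1r. Qed.
Lemma ipZl a x z : ip (a *: x) z = a * ip x z.
Proof.
case: hip => _ h _. have := h a x 0 z; rewrite addr0 => ->.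
have := h 1 0 0 z; rewrite scale1r addr0 mul1r => h0.
have -> : ip 0 z = 0 by lra.
by rewrite addr0.
Qed.
Lemma ipNl x z : ip (- x) z = - ip x z.
Proof. by rewrite -scaleN1r ipZl mulN1r. Qed.
Lemma ipBl x y z : ip (x - y) z = ip x z - ip y z.
Proof. by rewrite ipDl ipNl. Qed.
Lemma ipBr x y z : ip z (x - y) = ip z x - ip z y.
Proof. case: hip => s _ _. by rewrite s ipBl -!(s z). Qed.

Lemma key a w v : `|a - w| ^+ 2 - `|a - v| ^+ 2 = ip w w - ip v v - 2 * ip a (w - v).
Proof.
case: hip => s _ n. rewrite !n !ipBl !ipBr (s w a) (s v a). ring.
Qed.
End IP.

Theorem lemma4p9 (R : realType) (H : completeNormedModType R)
    (ip : H -> H -> R) (hip : is_inner_product ip)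
    (S : Type) (op : S -> S -> S) (hS : semigroup_law op)
    (C : set H) (hC : C !=set0) (T : S -> H -> H)
    (hT : representation_on op C T) :
  attractive_points C T !=set0 ->
  closed (attractive_points C T) /\
  convex_set (attractive_points C T : set (convex_lmodType H)).
Proof.
move=> _; split.
  have -> : attractive_points C T = \bigcap_(p in [set p : H * S | C p.1])
     ((fun a => `|a - p.1| - `|a - T p.2 p.1|) @^-1` [set r | 0 <= r]).
    rewrite /attractive_points; apply/seteqP; split => a /=.
      by move=> h [x s] /= Cx; rewrite subr_ge0; apply: h.
    by move=> h x s Cx; have := h (x, s) Cx; rewrite /= subr_ge0.
  apply: closed_bigI => -[x s] _; apply: preimage_closed; last exact: closed_ge.
  move=> a _; apply: cvgB; apply: cvg_norm; apply: cvgB; [exact: cvg_id|exact: cvg_cst|exact: cvg_id|exact: cvg_cst].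
move=> a b l; rewrite !inE /attractive_points /= => ha hb.
move=> x s Cx.
have E : forall c, (`|c - T s x| <= `|c - x|) <-> (`|c - T s x| ^+ 2 - `|c - x| ^+ 2 <= 0).
  by move=> c; rewrite subr_le0 ler_sqr ?nnegrE.
have zE : ((a <| l |> b : convex_lmodType H) : H) = l%:num *: (a : H) + (1 - l%:num) *: (b : H) by [].
apply/E; rewrite zE; have := hb x s Cx; have := ha x s Cx; move=> /E + /E.
rewrite !(@key _ _ _ hip) (@ipDl _ _ _ hip) !(@ipZl _ _ _ hip).
set p := ip a _; set q := ip b _.
move=> h1 h2.
have l0 : 0 <= l%:num by [].
have l1 : l%:num <= 1 by apply: le1.
nra.
Qed.
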